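(* Let $H_k = F_k[2..f_k]$ for $k\ge 2$. Then (i) for every $k \geq 2$, both $H_k$ and $H_k\cdot a$ are Nyldon words; (ii) for every $k\geq 4$, the longest Nyldon proper suffix of $H_k$ is $H_{k-2}$, and the longest Nyldon proper suffix of $H_k\cdot a$ is $H_{k-2}\cdot a$.
   Context: Strings are over the binary alphabet $\{a,b\}$ ordered by $a \prec b$, and $\prec$ also denotes the induced lexicographic order on strings: $x \prec y$ iff $x$ is a proper prefix of $y$, or there is $i$ with $x[1..i-1]=y[1..i-1]$ and $x[i]\prec y[i]$; $x\preceq y$ means $x\prec y$ or $x=y$. For a string $w$, $w[i..j]$ denotes the substring from position $i$ to position $j$ (1-indexed). Nyldon words are defined recursively: every string of length $1$ is a Nyldon word; a string $w$ with $|w|\ge 2$ is a Nyldon word iff there is no factorization $w=\gamma_1\cdots\gamma_m$ with $m\ge 2$, each $\gamma_i$ a nonempty Nyldon word, and $\gamma_1\preceq\gamma_2\preceq\cdots\preceq\gamma_m$. A Nyldon proper suffix of $w$ is a proper suffix of $w$ that is a Nyldon word; the longest Nyldon proper suffix of $w$ is the longest such suffix. Fibonacci words: $F_0=b$, $F_1=a$, $F_k=F_{k-1}F_{k-2}$ for $k\ge 2$; $f_k=|F_k|$. *)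

(* Defs.v *)
From mathcomp Require Import all_boot.
Set Implicit Arguments. Unset Strict Implicit. Unset Printing Implicit Defensive.

(* Binary alphabet {a,b} encoded in bool: a = false, b = true, so a < b. *)
Definition letter := bool.
Definition a : letter := false.
Definition b : letter := true.
Definition word := seq letter.

Fixpoint lexlt (x y : word) : bool :=
  match x, y with
  | [::], [::] => false
  | [::], _ :: _ => true
  | _ :: _, [::] => false
  | c :: x', d :: y' => (c < d) || ((c == d) && lexlt x' y')
  end.

Definition lexle (x y : word) : bool := (x == y) || lexlt x y.

(* Any factor of a
   factorization of w into >= 2 nonempty words has length <= size w - 1,
   so the recursion on the bound n is faithful to the recursive definition. *)
Fixpoint nyl (n : nat) (w : word) : Prop :=
  match n with
  | 0 => False
  | S m =>
      size w = 1 \/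
      (2 <= size w <= n /\
       ~ (exists gs : seq word,
             2 <= size gs /\
             (forall g, g \in gs -> nyl m g) /\
             flatten gs = w /\
             sorted lexle gs))
  end.

Definition Nyldon (w : word) : Prop := nyl (size w) w.

Definition nyldon_proper_suffix (w s : word) : Prop :=
  (exists p : word, p <> [::] /\ w = p ++ s) /\ Nyldon s.

Definition longest_nyldon_proper_suffix (w s : word) : Prop :=
  nyldon_proper_suffix w s /\
  forall s', nyldon_proper_suffix w s' -> size s' <= size s.

Fixpoint F (k : nat) : word :=
  match k with
  | 0 => [:: b]
  | 1 => [:: a]
  | S ((S j) as k1) => F k1 ++ F j
  end.

Definition H (k : nat) : word := behead (F k).

(* Main.v *)
Require Import Defs.
From mathcomp Require Import all_boot.
From Stdlib Require Import Classical.
From mathcomp Require Import zify.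
Set Implicit Arguments. Unset Strict Implicit. Unset Printing Implicit Defensive.


Lemma lexlt_irr x : lexlt x x = false.
Proof. elim: x => [|c x IH] //=; by rewrite ltnn eqxx IH. Qed.

Lemma lexlt_trans x y z : lexlt x y -> lexlt y z -> lexlt x z.
Proof.
elim: x y z => [|c x IH] [|d y] [|e z] //=.
by case: c; case: d; case: e => //=; apply: IH.
Qed.

Lemma lexlt_total x y : x != y -> lexlt x y || lexlt y x.
Proof.
elim: x y => [|c x IH] [|d y] //=.
case: c; case: d => //=; rewrite eqseq_cons /=; apply: IH.
Qed.

Lemma lexlt_asym x y : lexlt x y -> lexlt y x = false.
Proof. move=> h; apply/negP => h2; by move: (lexlt_trans h h2); rewrite lexlt_irr. Qed.

Lemma lexlt_prefix x y : y != [::] -> lexlt x (x ++ y).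
Proof.
elim: x => [|c x IH] /=; first by case: y.
by move=> /IH ->; rewrite eqxx orbT.
Qed.

Lemma lexlt_app z y w : lexlt z y -> lexlt z (y ++ w).
Proof.
elim: z y => [|c z IH] [|d y] //=.
by case/orP => [->//|/andP[->] /IH ->]; rewrite orbT.
Qed.

Lemma lexle_refl x : lexle x x.
Proof. by rewrite /lexle eqxx. Qed.

Lemma lexle_prefix x y : lexle x (x ++ y).
Proof.
case: y => [|c y]; first by rewrite cats0 lexle_refl.
by rewrite /lexle lexlt_prefix ?orbT.
Qed.

Lemma lexle_lt_trans x y z : lexle x y -> lexlt y z -> lexlt x z.
Proof. by case/orP => [/eqP->//|]; apply: lexlt_trans. Qed.

Lemma lexlt_le_trans x y z : lexlt x y -> lexle y z -> lexlt x z.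
Proof. by move=> h /orP[/eqP<-//|]; apply: lexlt_trans. Qed.

Lemma lexle_trans x y z : lexle x y -> lexle y z -> lexle x z.
Proof.
case/orP => [/eqP->//|h1] h2; apply/orP; right; exact: lexlt_le_trans h1 h2.
Qed.

Lemma lexltW x y : lexlt x y -> lexle x y.
Proof. by move=> h; rewrite /lexle h orbT. Qed.

Lemma nlt_le x y : ~~ lexlt y x -> lexle x y.
Proof.
move=> h; rewrite /lexle; case: eqP => //= /eqP ne.
by move: (lexlt_total ne); rewrite (negbTE h) orbF.
Qed.

Lemma le_nlt x y : lexle x y -> lexlt y x = false.
Proof. by case/orP => [/eqP->|/lexlt_asym]; rewrite ?lexlt_irr. Qed.


Lemma nyl_nil n : nyl n [::] -> False.
Proof. by case: n => //= n [|[]]. Qed.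

Lemma size_in_flatten (gs : seq word) (g : word) : g \in gs -> size g <= size (flatten gs).
Proof.
elim: gs => [|x r IH] //=; rewrite inE size_cat => /orP[/eqP->|/IH h].
  exact: leq_addr.
by rewrite (leq_trans h) // leq_addl.
Qed.

Lemma size_lt_flatten (gs : seq word) (g : word) :
  (forall h, h \in gs -> h <> [::]) -> 2 <= size gs -> g \in gs -> size g < size (flatten gs).
Proof.
case: gs => [|x [|y r]] //= hne _.
have hx : x <> [::] by apply: hne; rewrite inE eqxx.
have hy : y <> [::] by apply: hne; rewrite !inE eqxx orbT.
have hx0 : 0 < size x by case: (x) hx.
have hy0 : 0 < size y by case: (y) hy.
rewrite inE => /orP[/eqP hgx|hg].
  rewrite hgx /= !size_cat; lia.
have := size_in_flatten hg; rewrite /= !size_cat => h.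
lia.
Qed.

Lemma all_equiv (P Q : word -> Prop) (gs : seq word) w :
  2 <= size gs -> flatten gs = w ->
  (forall g, g <> [::] -> size g < size w -> (P g <-> Q g)) ->
  (forall g, P g -> g <> [::]) -> (forall g, Q g -> g <> [::]) ->
  ((forall g, g \in gs -> P g) <-> (forall g, g \in gs -> Q g)).
Proof.
move=> h2 hf hPQ hP hQ; split => H g hg.
- have hs : size g < size w by rewrite -hf; apply: size_lt_flatten => // h /H /hP.
  by apply/(hPQ g (hP _ (H _ hg)) hs); apply: H.
- have hs : size g < size w by rewrite -hf; apply: size_lt_flatten => // h /H /hQ.
  by apply/(hPQ g (hQ _ (H _ hg)) hs); apply: H.
Qed.

Lemma nylP n w : size w <= n -> (nyl n w <-> Nyldon w).
Proof.
rewrite /Nyldon.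
elim: n {-2}n (leqnn n) w => [|N IHN] n hn w hw.
  by move: hn hw; rewrite leqn0 => /eqP-> ; rewrite leqn0 => /eqP ->.
case: n hn hw => [|m] hn hw.
  by move: hw; rewrite leqn0 => /eqP ->.
case hs: (size w) => [|s].
  by move/size0nil: hs => ->; split => /nyl_nil.
rewrite hs in hw.
have key : forall gs, 2 <= size gs -> flatten gs = w ->
  ((forall g, g \in gs -> nyl m g) <-> (forall g, g \in gs -> nyl s g)).
  move=> gs h2 hf; apply: all_equiv h2 hf _ _ _.
  - move=> g _ hg; rewrite hs ltnS in hg.
    have hm : m <= N by lia.
    have hgm : size g <= m by lia.
    rewrite (IHN m hm g hgm).
    have hsN : s <= N by lia.
    by rewrite (IHN s hsN g hg).
  - by move=> g hg heq; subst g; apply: nyl_nil hg.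
  - by move=> g hg heq; subst g; apply: nyl_nil hg.
simpl; split.
- case=> [h|[h1 hne]]; [by left|right]; split.
    by move: h1; rewrite hs => /andP[h1 _]; rewrite h1 leqnn.
  move=> [gs [h2 [hall [hf hsort]]]]; apply: hne; exists gs; split=> //; split=> //.
  by apply/(key gs h2 hf).
- case=> [h|[h1 hne]]; [by left|right]; split.
    by move: h1; rewrite hs => /andP[h1 _]; rewrite h1 hw.
  move=> [gs [h2 [hall [hf hsort]]]]; apply: hne; exists gs; split=> //; split=> //.
  by apply/(key gs h2 hf).
Qed.

Definition isfact (gs : seq word) (w : word) :=
  (forall g, g \in gs -> Nyldon g) /\ flatten gs = w /\ sorted lexle gs.

Lemma Nyldon_nil : ~ Nyldon [::].
Proof. by []. Qed.

Lemma Nyldon_ne w : Nyldon w -> w <> [::].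
Proof. by move=> h e; subst w. Qed.

Lemma NyE w : Nyldon w <->
  (size w = 1 \/ (2 <= size w /\ ~ exists gs, 2 <= size gs /\ isfact gs w)).
Proof.
rewrite {1}/Nyldon; case hs: (size w) => [|m].
  by split => // -[//|[//]].
have key : forall gs, 2 <= size gs -> flatten gs = w ->
  ((forall g, g \in gs -> nyl m g) <-> (forall g, g \in gs -> Nyldon g)).
  move=> gs h2 hf; apply: all_equiv h2 hf _ _ _.
  - by move=> g _; rewrite hs ltnS => hg; apply: nylP.
  - by move=> g hg heq; subst g; apply: nyl_nil hg.
  - by move=> g hg heq; subst g.
simpl; split.
- case=> [h|[h1 hne]]; [by left; rewrite -hs|right]; split; first by rewrite -hs; case/andP: h1.
  move=> [gs [h2 [hall [hf hsort]]]]; apply: hne; exists gs; split=> //; split=> //.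
  by apply/(key gs h2 hf).
- case=> [h|[h1 hne]]; [by left; rewrite hs|right]; split; first by rewrite hs h1 leqnn.
  move=> [gs [h2 [hall [hf hsort]]]]; apply: hne; exists gs; split=> //; split=> //.
  by apply/(key gs h2 hf).
Qed.

Lemma not_nyl_fact w gs : Nyldon w -> 2 <= size gs -> isfact gs w -> False.
Proof.
move=> /NyE [h1|[_ h]] h2 hf; last by apply: h; exists gs.
case: hf => hall [hf _].
have hne : forall g, g \in gs -> g <> [::] by move=> g /hall /Nyldon_ne.
case: gs h2 hall hf hne => [|x [|y r]] //= _ _ hf hne.
have hx : x <> [::] by apply: hne; rewrite inE eqxx.
have hy : y <> [::] by apply: hne; rewrite !inE eqxx orbT.
have hx0 : 0 < size x by case: (x) hx.
have hy0 : 0 < size y by case: (y) hy.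
move: h1; rewrite -hf !size_cat; lia.
Qed.

Lemma exfact w : w <> [::] -> exists gs, isfact gs w.
Proof.
move=> hw; case: (classic (Nyldon w)) => hN.
  exists [:: w]; split; [by move=> g; rewrite inE => /eqP->|by rewrite /= cats0].
apply: NNPP => hno; apply: (hN); apply/NyE; right; split.
  case hs: (size w) => [|[|s]] //; first by move/size0nil: hs.
  by exfalso; apply: (hN); apply/NyE; left.
by move=> [gs [_ h]]; apply: hno; exists gs.
Qed.


Fixpoint nmerge (x : word) (L : seq word) : seq word :=
  match L with
  | [::] => [:: x]
  | f :: L' => if lexlt f x then nmerge (x ++ f) L' else x :: f :: L'
  end.

Fixpoint CF (w : word) : seq word :=
  match w with
  | [::] => [::]
  | c :: u => nmerge [:: c] (CF u)
  end.

Lemma flatten_merge x L : flatten (nmerge x L) = x ++ flatten L.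
Proof.
elim: L x => [|f L IH] x /=; first by rewrite cats0.
by case: ifP => _; rewrite ?IH /= catA.
Qed.

Lemma flatten_CF w : flatten (CF w) = w.
Proof. by elim: w => [|c w IH] //=; rewrite flatten_merge IH. Qed.

Lemma merge_cat x M L y : nmerge x M = [:: y] -> nmerge x (M ++ L) = nmerge y L.
Proof.
elim: M x => [|f M IH] x /=; first by case=> ->.
by case: ifP => // _; apply: IH.
Qed.

Lemma mergeP x L : exists M L', L = M ++ L' /\ nmerge x L = (x ++ flatten M) :: L' /\
  nmerge x M = [:: x ++ flatten M] /\
  (forall f L'', L' = f :: L'' -> ~~ lexlt f (x ++ flatten M)).
Proof.
elim: L x => [|f L IH] x.
  by exists [::], [::]; rewrite /= cats0.
rewrite /=; case: ifP => hf.
  have [M [L' [-> [h1 [h2 h3]]]]] := IH (x ++ f).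
  rewrite -catA in h1 h2 h3.
  exists (f :: M), L'; rewrite /= hf; split=> //; split=> //; split=> //.
exists [::], (f :: L); rewrite /= cats0; split=> //; split=> //; split=> //.
by move=> f' L'' [<- _]; rewrite hf.
Qed.

Lemma merge_single x L y : nmerge x L = [:: y] ->
  L = [::] \/ exists L0 f, L = rcons L0 f /\ lexlt f (x ++ flatten L0).
Proof.
elim: L x => [|f L IH] x; first by left.
rewrite /=; case: ifP => // hf /IH [->|[L0 [f' [-> h]]]]; right.
  by exists [::], f; rewrite cats0.
by exists (f :: L0), f'; rewrite /= catA.
Qed.

Lemma merge_rcons x L v : (forall y, nmerge x L = [:: y] -> lexle y v) ->
  nmerge x (rcons L v) = rcons (nmerge x L) v.
Proof.
elim: L x => [|f L IH] x /= h; first by rewrite (le_nlt (h x erefl)).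
by move: h; case: ifP => // _; apply: IH.
Qed.

Lemma merge_stop x f L : lexle x f -> nmerge x (f :: L) = x :: f :: L.
Proof. by move=> h /=; rewrite (le_nlt h). Qed.

Lemma sorted_app (E : seq word) f r : sorted lexle E -> sorted lexle (f :: r) ->
  (E <> [::] -> lexle (last [::] E) f) -> sorted lexle (E ++ f :: r).
Proof.
case: E => [|e E] //= hE hfr hl.
by rewrite cat_path hE /= hfr andbT; apply: hl.
Qed.

Lemma app_eq (x1 y1 x2 y2 : word) : x1 ++ y1 = x2 ++ y2 -> size y2 <= size y1 ->
  exists m, y1 = m ++ y2 /\ x2 = x1 ++ m.
Proof.
elim: x1 x2 => [|c x1 IH] x2 /=; first by move=> -> _; exists x2.
case: x2 => [|d x2] /=.
  by move=> <- ; rewrite /= size_cat; lia.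
by case=> -> /IH h /h [m [h1 h2]]; exists m; rewrite h2.
Qed.

Lemma lastfact E t0 : isfact E t0 -> t0 <> [::] ->
  Nyldon (last [::] E) /\ exists p, t0 = p ++ last [::] E.
Proof.
case: (lastP E) => [|E0 e] [hall [hf hs]] ht; first by rewrite -hf in ht.
rewrite last_rcons; split; first by apply: hall; rewrite mem_rcons mem_head.
by exists (flatten E0); rewrite -hf flatten_rcons.
Qed.

Lemma isfact_split M L w : isfact (M ++ L) w ->
  isfact M (flatten M) /\ isfact L (flatten L).
Proof.
move=> [hall [hf hs]]; have [h1 h2] := cat_sorted2 hs.
split; split=> //; try (split=> //); move=> g hg; apply: hall; by rewrite mem_cat hg ?orbT.
Qed.

Lemma isfact_tail g r w : isfact (g :: r) w -> isfact r (flatten r).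
Proof. by move=> h; have [] := @isfact_split [:: g] r w h. Qed.

Lemma isfact_nil_ne gs w : isfact gs w -> w <> [::] -> gs <> [::].
Proof. by move=> [_ [<- _]] h e; subst gs. Qed.

Lemma isfact_cat E R u v : isfact E u -> isfact R v ->
  (forall f r, R = f :: r -> E <> [::] -> lexle (last [::] E) f) -> isfact (E ++ R) (u ++ v).
Proof.
move=> [hE [fE sE]] [hR [fR sR]] hl; split.
  by move=> g; rewrite mem_cat => /orP[/hE|/hR].
split; first by rewrite flatten_cat fE fR.
case: R hR fR sR hl => [|f r] _ _ sR hl; first by rewrite cats0.
by apply: sorted_app => //; apply: hl.
Qed.

Definition Bp n := forall w gs, size w <= n -> isfact gs w -> gs = CF w.
Definition Kp n := forall (g p t : word), size g <= n -> Nyldon g -> g = p ++ t ->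
  p <> [::] -> Nyldon t -> lexlt t g.

Lemma B_nil gs : isfact gs [::] -> gs = [::].
Proof.
case: gs => [|g r] // [hall [hf _]].
have /Nyldon_ne := hall g (mem_head _ _); by case: g {hall} hf.
Qed.

Lemma CFN n : Bp n -> forall y, size y <= n -> y <> [::] -> CF y = [:: y] -> Nyldon y.
Proof.
move=> HB y hy hne hcf; apply/NyE.
case hs: (size y) => [|[|s]]; [by move/size0nil: hs|by left|right].
split=> // -[gs [h2 hf]]; move: (HB y gs hy hf); rewrite hcf => e; by subst gs.
Qed.

Lemma NCF n : Bp n -> forall y, size y <= n -> Nyldon y -> CF y = [:: y].
Proof.
move=> HB y hy hN; symmetry; apply: HB => //; split.
  by move=> g; rewrite inE => /eqP ->.
by rewrite /= cats0.
Qed.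


Lemma P1 n : Kp n -> forall gs v t s, size v <= n -> isfact gs v -> v = t ++ s ->
  Nyldon s -> size s <= size (last [::] gs).
Proof.
move=> HK; elim=> [|g r IH] v t s hv hfa hvt hN.
  case: hfa => _ [hf _]; have := congr1 size hvt; rewrite -hf size_cat /=; lia.
have hg : Nyldon g by case: hfa => h _; apply: h; rewrite mem_head.
case: r IH hfa => [|f r] IH hfa.
  case: hfa => _ [hf _]; move: hf; rewrite /= cats0 => e; subst g.
  by move: hv; rewrite hvt size_cat => _; rewrite leq_addl.
have hfr := isfact_tail hfa.
case: (hfa) => hall [hf hs].
have hgf : lexle g f by move: hs => /= /andP[].
have ev : g ++ flatten (f :: r) = t ++ s by rewrite -hvt -hf.
case: (leqP (size s) (size (flatten (f :: r)))) => hsz.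
  have [m [e1 _]] := app_eq ev hsz.
  apply: (IH (flatten (f :: r)) m) => //.
  by move: hv; rewrite -hf /= !size_cat; lia.
exfalso.
have [m [e1 e2]] := app_eq (esym ev) (ltnW hsz).
case: t ev e2 hvt => [|c t] ev e2 hvt.
  subst g; apply: (not_nyl_fact hN (isT : 2 <= size (m :: f :: r))).
  by rewrite e1; split=> //; split=> //.
have hm : m <> [::] by move=> e; move: hsz; rewrite e1 e /= ltnn.
have [E hE] := exfact hm.
have [hNe [p hp]] := lastfact hE hm.
have hlt : lexlt (last [::] E) g.
  apply: (HK g (c :: t ++ p)) => //.
  - by move: hv; rewrite -hf /= !size_cat; lia.
  - by rewrite e2 hp /= catA.
have hEne := isfact_nil_ne hE hm.
apply: (not_nyl_fact hN (_ : 2 <= size (E ++ f :: r))).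
  by case: E hEne {hE hlt hNe hp} => // e E _; rewrite /= size_cat addnS.
rewrite e1; apply: isfact_cat => // f' r' [<- _] _.
by apply: lexltW; apply: lexlt_le_trans hlt hgf.
Qed.

Lemma Bstep n : Bp n -> Kp n -> Bp n.+1.
Proof.
move=> HB HK w gs hw hfa.
case: w hw hfa => [|c u] hw hfa; first by rewrite (B_nil hfa).
case: gs hfa => [|g1 rest] hfa; first by case: hfa => _ [].
case: (hfa) => hall [hf hs].
have hg1 : Nyldon g1 by apply: hall; rewrite mem_head.
case: g1 hg1 hall hf hs hfa => [|c' v1] hg1 hall hf hs hfa; first by [].
case: hf => ec hu; subst c'.
have hfr := isfact_tail hfa.
have hun : size u <= n by [].
case: v1 hu hg1 hall hs hfa => [|d v1] hu hg1 hall hs hfa.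
  rewrite /= in hu; rewrite hu in hfr.
  have hr := HB u rest hun hfr.
  rewrite /= -hr.
  case: rest hs {hfa hfr hu hr hall} => [|f r] hs //.
  by rewrite merge_stop //; move: hs => /= /andP[].
set v := d :: v1.
have hvne : v <> [::] by [].
case: rest hu hs hfa hfr hall => [|f r] hu hs hfa hfr hall.
  rewrite /= cats0 in hu; subst u.
  have [E hE] := exfact hvne.
  have hEu := HB v E hun hE.
  have [M [L' [eE [hm1 [hm2 hm3]]]]] := mergeP [:: c] E.
  rewrite (_ : CF (c :: v) = nmerge [:: c] (CF v)) // -hEu hm1.
  case: L' eE hm1 hm3 => [|f L''] eE hm1 hm3.
    by rewrite /= -(flatten_CF v) -hEu eE cats0.
  exfalso.
  have hE' := hE; rewrite eE in hE'.
  have [hM hL] := isfact_split hE'.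
  have hvE : v = flatten M ++ flatten (f :: L'') by case: hE => _ [<- _]; rewrite eE flatten_cat.
  have hfN : f <> [::] by apply: Nyldon_ne; case: hL => h _; apply: h; rewrite mem_head.
  have hszM : size (c :: flatten M) <= n.
    have hf0 : 0 < size f by case: (f) hfN.
    have : size v <= n := hun.
    rewrite hvE /= !size_cat; lia.
  have hMcf := HB (flatten M) M (leq_trans (leqnSn _) hszM) hM.
  have hy : CF (c :: flatten M) = [:: c :: flatten M].
    by rewrite (_ : CF (c :: flatten M) = nmerge [:: c] (CF (flatten M))) // -hMcf hm2.
  have hyN := CFN HB hszM (fun e : c :: flatten M = [::] => ltac:(discriminate e)) hy.
  apply: (not_nyl_fact hg1 (_ : 2 <= size ([:: c :: flatten M] ++ f :: L''))) => //.
  rewrite (_ : [:: c, d & v1] = (c :: flatten M) ++ flatten (f :: L'')); last by rewrite /= -hvE.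
  apply: isfact_cat => //.
    by split; [move=> g; rewrite inE => /eqP->|rewrite /= cats0].
  move=> f' r' [<- _] _; apply: nlt_le; exact: hm3 f L'' erefl.
have hfN : f <> [::] by apply: Nyldon_ne; apply: hall; rewrite !inE eqxx orbT.
have hf0 : 0 < size f by case: (f) hfN.
have hcv : size (c :: v) <= n.
  move: hw; rewrite -hu /= !size_cat; lia.
have [E hE] := exfact hvne.
have [hNe [p hp]] := lastfact hE hvne.
have hlt : lexlt (last [::] E) (c :: v).
  by apply: (HK (c :: v) (c :: p)) => //; rewrite /= hp.
have hgf : lexle (c :: v) f by move: hs => /= /andP[].
have hEu : isfact (E ++ f :: r) u.
  rewrite -hu; apply: isfact_cat => // f' r' [<- _] _.
  by apply: lexltW; apply: lexlt_le_trans hlt hgf.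
have hCFu := HB u _ hun hEu.
have hCFv := HB v E (leq_trans (leqnSn _) hcv) hE.
have hsing : [:: c :: v] = CF (c :: v).
  apply: HB => //; split; [by move=> g; rewrite inE => /eqP->|by rewrite /= cats0].
have hm : nmerge [:: c] E = [:: c :: v].
  by rewrite hsing hCFv.
rewrite (_ : CF (c :: u) = nmerge [:: c] (CF u)) // -hCFu (merge_cat _ hm) merge_stop //.
Qed.


Lemma Kstep n : Bp n.+1 -> Kp n -> Kp n.+1.
Proof.
move=> HB' HK g p t hg hN ep hp ht.
have HB : Bp n by move=> w gs hw; apply: HB'; apply: leq_trans hw _.
have htne := Nyldon_ne ht.
case: p ep hp => [|c p'] // ep _.
set u := p' ++ t.
have hune : u <> [::] by rewrite /u; case: (t) htne => // ? ?; case: (p').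
have hcg := NCF HB' hg hN.
have [E hE] := exfact hune.
have hun : size u <= n by move: hg; rewrite ep.
have hCFu := HB u E hun hE.
have hm : nmerge [:: c] E = [:: g].
  by rewrite hCFu -hcg ep.
case: (merge_single hm) => [eE|[E0 [f [eE hlt]]]].
  by case: hE => _ [hf _]; exfalso; apply: hune; rewrite -hf eE.
have hfu : flatten E = p' ++ t by case: hE => _ [-> _].
have hgE : g = (c :: flatten E0) ++ f.
  by rewrite ep /= -hfu eE flatten_rcons.
have hfg : lexlt f g by rewrite hgE; apply: lexlt_app.
have hsz := P1 HK hun hE (erefl : u = p' ++ t) ht.
rewrite eE last_rcons in hsz.
have eu : flatten E0 ++ f = p' ++ t.
  by rewrite -hfu eE flatten_rcons.
have [m [e1 _]] := app_eq eu hsz.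
case: m e1 => [|x m] e1; first by move: hfg; rewrite e1.
have hfN : Nyldon f by case: hE => h _; apply: h; rewrite eE mem_rcons mem_head.
apply: lexlt_trans hfg; apply: (HK f (x :: m)) => //.
by move: hun; rewrite /u -eu size_cat; lia.
Qed.

Lemma BK n : Bp n /\ Kp n.
Proof.
elim: n => [|n [HB HK]].
  split; first by move=> w gs; rewrite leqn0 => /nilP -> /B_nil ->.
  by move=> g p t; rewrite leqn0 => /nilP -> _; case: p.
have HB' := Bstep HB HK; split=> //; exact: Kstep.
Qed.

Lemma uniqB w gs : isfact gs w -> gs = CF w.
Proof. by have [HB _] := BK (size w); apply: HB. Qed.

Lemma Kgen (g p t : word) : Nyldon g -> g = p ++ t -> p <> [::] -> Nyldon t -> lexlt t g.
Proof. by have [_ HK] := BK (size g); apply: HK. Qed.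

Lemma NyCF w : Nyldon w <-> (w <> [::] /\ CF w = [:: w]).
Proof.
have [HB _] := BK (size w); split.
  by move=> h; split; [exact: Nyldon_ne|exact: NCF HB _ _ h].
by case=> h1 h2; apply: CFN HB _ _ h1 h2.
Qed.


Definition SP (p v : word) := forall t1 t', p = t1 ++ t' -> t1 <> [::] -> t' <> [::] ->
  Nyldon t' -> lexle t' v.


Lemma ExtL t v : Nyldon v ->
  (forall t1 t', t = t1 ++ t' -> t' <> [::] -> Nyldon t' -> lexle t' v) ->
  CF (t ++ v) = rcons (CF t) v.
Proof.
move=> hv; elim: t => [|c t0 IH] h.
  by have [_ ->] := (NyCF v).1 hv.
rewrite /= IH; last by move=> t1 t' e; apply: (h (c :: t1)); rewrite e.
apply: merge_rcons => y hy.
have hc : CF (c :: t0) = [:: y] by [].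
have ey : y = c :: t0 by rewrite -(flatten_CF (c :: t0)) hc /= cats0.
subst y; apply: (h [::]) => //.
by apply/NyCF; split.
Qed.

Lemma MergeN p v : Nyldon p -> Nyldon v -> lexlt v p -> SP p v -> Nyldon (p ++ v).
Proof.
move=> hp hv hlt hsp.
have hpne := Nyldon_ne hp.
case: p hp hpne hlt hsp => [|c u] // hp _ hlt hsp.
apply/NyCF; split=> //.
have hcf : CF (c :: u) = [:: c :: u] by have [_ ->] := (NyCF _).1 hp.
rewrite /= (ExtL hv); last first.
  move=> t1 t' e hne hN; apply: (hsp (c :: t1)) => //; by rewrite e.
rewrite -cats1 (merge_cat _ (_ : nmerge [:: c] (CF u) = [:: c :: u])) //=.
by rewrite hlt.
Qed.

Lemma NotN t0 v : t0 <> [::] -> Nyldon v ->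
  (forall t1 t', t0 = t1 ++ t' -> t' <> [::] -> Nyldon t' -> lexle t' v) -> ~ Nyldon (t0 ++ v).
Proof.
move=> hne hv h hN.
have [E hE] := exfact hne.
have [hNe [p hp]] := lastfact hE hne.
have hEne := isfact_nil_ne hE hne.
apply: (not_nyl_fact hN (_ : 2 <= size (E ++ [:: v]))).
  by case: E hEne {hE hNe hp} => // e E _; rewrite /= size_cat addnS.
apply: isfact_cat => //.
  by split; [move=> g; rewrite inE => /eqP->|rewrite /= cats0].
move=> f r [<- _] _; apply: (h p) => //; exact: Nyldon_ne.
Qed.

Lemma SufGen p v : Nyldon v -> SP p v -> forall t1 t', p ++ v = t1 ++ t' -> t1 <> [::] ->
  Nyldon t' -> size t' <= size v /\ lexle t' v.
Proof.
move=> hv hsp t1 t' e ht1 hN.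
case: (leqP (size t') (size v)) => hsz.
  split=> //.
  have [m [e1 _]] := app_eq e hsz.
  case: m e1 => [|x m] e1; first by rewrite e1 lexle_refl.
  by apply: lexltW; apply: (@Kgen v (x :: m) t').
exfalso.
have [m [e1 e2]] := app_eq (esym e) (ltnW hsz).
have hm : m <> [::] by move=> em; move: hsz; rewrite e1 em /= ltnn.
have hN' : Nyldon (m ++ v) by rewrite -e1.
apply: (NotN hm hv _ hN').
move=> s1 s' es hs' hNs; apply: (hsp (t1 ++ s1)) => //.
  by rewrite e2 es catA.
by case: t1 ht1 {e e2}.
Qed.

Lemma single_SP (p v : word) : size p <= 1 -> SP p v.
Proof.
move=> hs t1 t' e h1 h2; exfalso; move: hs; rewrite e size_cat.
case: t1 h1 {e} => // ? ? _; case: t' h2 => // ? ? _ /=; lia.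
Qed.

Lemma Nyldon1 (c : letter) : Nyldon [:: c].
Proof. by apply/NyE; left. Qed.


Definition G k := H k ++ [:: a].

Lemma FS j : F j.+2 = F j.+1 ++ F j.
Proof. by []. Qed.

Lemma F_head' j : exists r, F j.+1 = a :: r.
Proof.
elim: j => [|j [r IH]]; first by exists [::].
by exists (r ++ F j); rewrite FS IH.
Qed.

Lemma F_head j : F j.+1 = a :: H j.+1.
Proof. by have [r hr] := F_head' j; rewrite /H hr. Qed.

Lemma HS j : H j.+3 = G j.+2 ++ H j.+1.
Proof.
have [r hr] := F_head' j.+1.
by rewrite /G [H j.+3]/H [H j.+2]/H FS hr (F_head j) cat_cons /= -catA.
Qed.

Lemma GS j : G j.+3 = G j.+2 ++ G j.+1.
Proof. by rewrite {1}/G HS -catA. Qed.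

Lemma G_ne k : G k <> [::].
Proof. by rewrite /G; case: (H k). Qed.

Lemma Glt k : 1 <= k -> lexlt (G k) (G k.+1).
Proof.
case: k => [|[|j]] // _.
rewrite GS; apply: lexlt_prefix; apply/eqP; exact: G_ne.
Qed.

Lemma Gle k : lexle (G k) (G k.+1).
Proof. case: k => [|k]; [by []|apply: lexltW; exact: Glt]. Qed.

Lemma HltG j : lexlt (H j.+2) (G j.+3).
Proof. by rewrite GS /G -catA; apply: lexlt_prefix. Qed.

Lemma GleH j : lexle (G j.+1) (H j.+2).
Proof.
case: j => [|i]; first by [].
by rewrite HS; apply: lexle_prefix.
Qed.

Definition P j := Nyldon (G j) /\ SP (G j) (G (j - 2)).

Lemma PR k : P k.+1 /\ P k.+2.
Proof.
elim: k => [|k [[hN1 hS1] [hN2 hS2]]].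
  split; first by split; [exact: Nyldon1|apply: single_SP].
  have e : G 2 = [:: b] ++ [:: a] by [].
  split; rewrite e.
    by apply: MergeN => //; [exact: Nyldon1|exact: Nyldon1|exact: single_SP].
  move=> t1 t' e' h1 h2 hN.
  have := SufGen (Nyldon1 a) (@single_SP [:: b] [:: a] (leqnn _)) e' h1 hN.
  by case.
split=> //.
have hsp : SP (G k.+2) (G k.+1).
  move=> t1 t' e h1 h2 hN; apply: lexle_trans (hS2 t1 t' e h1 h2 hN) _.
  by rewrite (_ : k.+2 - 2 = k) ?Gle //; lia.
split; rewrite GS.
  by apply: MergeN => //; apply: Glt.
move=> t1 t' e h1 h2 hN.
rewrite (_ : k.+3 - 2 = k.+1); last by lia.
by have [] := SufGen hN1 hsp e h1 hN.
Qed.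

Lemma PG k : 1 <= k -> P k.
Proof. by case: k => [|k] // _; have [] := PR k. Qed.

Lemma SPG j : SP (G j.+3) (H j.+2).
Proof.
move=> t1 t' e h1 h2 hN; have [_ hs] := PG (isT : 1 <= j.+3).
apply: lexle_trans (hs t1 t' e h1 h2 hN) _.
by rewrite (_ : j.+3 - 2 = j.+1) ?GleH //; lia.
Qed.

Lemma SPG' j : SP (G j.+3) (G j.+2).
Proof.
move=> t1 t' e h1 h2 hN; have [_ hs] := PG (isT : 1 <= j.+3).
apply: lexle_trans (hs t1 t' e h1 h2 hN) _.
by rewrite (_ : j.+3 - 2 = j.+1) ?Gle //; lia.
Qed.

Lemma HN k : Nyldon (H k.+2) /\ Nyldon (H k.+3).
Proof.
elim: k => [|k [h1 h2]].
  by split; [exact: Nyldon1|have [] := PG (isT : 1 <= 2)].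
split=> //; rewrite HS.
apply: MergeN => //; [by have [] := PG (isT : 1 <= k.+3)|exact: HltG|exact: SPG].
Qed.

Lemma HN2 k : 2 <= k -> Nyldon (H k).
Proof. by case: k => [|[|k]] // _; have [] := HN k. Qed.

Theorem lemma3 :
  (forall k : nat, 2 <= k -> Nyldon (H k) /\ Nyldon (H k ++ [:: a])) /\
  (forall k : nat, 4 <= k ->
     longest_nyldon_proper_suffix (H k) (H (k - 2)) /\
     longest_nyldon_proper_suffix (H k ++ [:: a]) (H (k - 2) ++ [:: a])).
Proof.
split.
  move=> k hk; split; first exact: HN2.
  by have [] := PG (_ : 1 <= k); [lia|].
case=> [|[|[|[|j]]]] // _.
rewrite (_ : j.+4 - 2 = j.+2); last by lia.
have hH := HN2 (isT : 2 <= j.+2).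
have hG : Nyldon (G j.+2) by have [] := PG (isT : 1 <= j.+2).
split.
  split.
    split=> //; exists (G j.+3); split; [exact: G_ne|exact: HS].
  move=> s' [[p' [hp' e]] hN].
  have e' : G j.+3 ++ H j.+2 = p' ++ s' by rewrite -HS.
  by have [] := SufGen hH (@SPG j) e' hp' hN.
change (longest_nyldon_proper_suffix (G j.+4) (G j.+2)).
split.
  split=> //; exists (G j.+3); split; [exact: G_ne|exact: GS].
move=> s' [[p' [hp' e]] hN].
have e' : G j.+3 ++ G j.+2 = p' ++ s' by rewrite -GS.
by have [] := SufGen hG (@SPG' j) e' hp' hN.
Qed.
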